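(* Let $G$ be the inverse limit of an inverse system $(G_n)_{n\geq 0}$ of finite groups with surjective homomorphisms $\rho_n : G_{n+1} \to G_n$, where each $G_n$ has a specified normal subgroup $A_n$. Write $P_n = \rho_n(A_{n+1})$ and $B_{n+1} = \ker \rho_n$. Suppose that for all but finitely many $n$, $(A_n,B_n)$ is a critical pair in $G_n$ and $P_n C_{G_n}(P_n) \leq B_n$. Then $G$ is just infinite and not virtually pronilpotent. Suppose in addition that the following condition $( * )$ holds: for infinitely many $n$, whenever $U$ is a subgroup of $G_n$ whose distinct $G_n$-conjugates pairwise centralise each other and together generate a subgroup of $G_n$ containing $A_n$, then $U \unlhd G_n$. Then $G$ is hereditarily just infinite.
   Context: All groups are profinite, homomorphisms continuous, subgroups closed. A profinite group is \emph{just infinite} if it is infinite and every non-trivial closed normal subgroup has finite index; \emph{hereditarily just infinite} if moreover every open subgroup is just infinite. ''Pronilpotent'' means an inverse limit of finite nilpotent groups. For normal subgroups $B < A$ of $G$, $(A,B)$ is a \emph{critical pair} in $G$ if $B$ contains every normal subgroup of $G$ properly contained in $A$. $C_{G_n}(P_n)$ denotes the centraliser of $P_n$ in $G_n$. *)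

(* Defs.v *)
(* Profinite group = inverse limit of finite groups, modelled
   concretely as compatible threads of elements. *)
From HB Require Import structures.
From mathcomp Require Import all_boot all_fingroup all_solvable.
Set Implicit Arguments. Unset Strict Implicit. Unset Printing Implicit Defensive.

Local Open Scope group_scope.

(* An inverse system (G_n)_{n>=0} of finite groups with surjective
   homomorphisms rho_n : G_{n+1} -> G_n.  G_n is the full group [set: grp n]. *)
Record invsys := InvSys {
  grp : nat -> finGroupType;
  rho : forall n, {morphism [set: grp n.+1] >-> grp n};
  rho_onto : forall n, rho n @* [set: grp n.+1] = [set: grp n] }.

Definition critical_pair (gT : finGroupType) (G A B : {set gT}) : Prop :=
  [/\ A <| G, B <| G, B \proper A &
      forall N : {group gT}, N <| G -> N \proper A -> N \subset B].

Definition Pn (S : invsys) (A : forall n, {set grp S n}) (n : nat) : {set grp S n} :=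
  rho S n @* A n.+1.

Section Lim.
Variable S : invsys.

Definition elt := forall n, grp S n.
Definition in_lim (x : elt) : Prop := forall n, rho S n (x n.+1) = x n.
Definition e1 : elt := fun n => 1.
Definition emul (x y : elt) : elt := fun n => x n * y n.
Definition einv (x : elt) : elt := fun n => (x n)^-1.
Definition eeq (x y : elt) : Prop := forall n, x n = y n.
Definition epred := elt -> Prop.

Definition Glim : epred := in_lim.

Definition esub (H K : epred) : Prop := forall x, H x -> K x.

Definition subgrp (H : epred) : Prop :=
  [/\ esub H in_lim, H e1,
      (forall x y, H x -> H y -> H (emul x y)) &
      (forall x, H x -> H (einv x))].

Definition eclosed (H : epred) : Prop :=
  forall x, in_lim x -> (forall n, exists y, H y /\ y n = x n) -> H x.

Definition enormalizes (K H : epred) : Prop :=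
  forall g h, K g -> H h -> H (emul (einv g) (emul h g)).

Definition efinite (K : epred) : Prop :=
  exists m (f : 'I_m -> elt), forall g, K g -> exists i, eeq g (f i).

Definition finite_index (H K : epred) : Prop :=
  exists m (f : 'I_m -> elt), (forall i, K (f i)) /\
    forall g, K g -> exists i, H (emul (einv (f i)) g).

Definition nontrivial (N : epred) : Prop := exists h, N h /\ ~ eeq h e1.

(* just infinite (K is meant to be a closed subgroup of G, hence profinite) *)
Definition just_infinite (K : epred) : Prop :=
  ~ efinite K /\
  forall N, subgrp N -> eclosed N -> esub N K -> enormalizes K N ->
    nontrivial N -> finite_index N K.

(* H is an open subgroup of K: a subgroup containing a basic neighbourhood
   {x in K | x_n = 1} of the identity of K *)
Definition open_subgrp (H K : epred) : Prop :=
  [/\ subgrp H, esub H K & exists n, forall x, K x -> x n = 1 -> H x].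

Definition hereditarily_just_infinite (K : epred) : Prop :=
  just_infinite K /\ forall H, open_subgrp H K -> just_infinite H.

(* A closed subgroup H is the inverse limit of its images in the G_n;
   it is pronilpotent when all these finite images are nilpotent. *)
Definition pronilpotent (H : epred) : Prop :=
  forall n, exists P : {group grp S n},
    (forall g, g \in P <-> exists x, H x /\ x n = g) /\ nilpotent P.

Definition virtually_pronilpotent (K : epred) : Prop :=
  exists H, open_subgrp H K /\ pronilpotent H.

End Lim.
Arguments Glim S : clear implicits.

(* Main.v *)
From Stdlib Require Import FunctionalExtensionality ClassicalEpsilon Classical.
Require Import Defs.
From HB Require Import structures.
From mathcomp Require Import all_boot all_fingroup all_solvable zify.
Local Open Scope group_scope.

Section Lim.
Variable S : invsys.
Local Notation grp := (grp S).
Local Notation rho := (rho S).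
Local Notation elt := (elt S).
Local Notation in_lim := (@in_lim S).
Local Notation e1 := (@e1 S).

Lemma elt_ext (x y : elt) : eeq x y -> x = y.
Proof. move=> h; apply: functional_extensionality_dep => n; exact: h. Qed.

Lemma rhoM n (a b : grp n.+1) : rho n (a * b) = rho n a * rho n b.
Proof. by rewrite morphM ?inE. Qed.
Lemma rhoV n (a : grp n.+1) : rho n a^-1 = (rho n a)^-1.
Proof. by rewrite morphV ?inE. Qed.
Lemma rho1 n : rho n 1 = 1.
Proof. exact: morph1. Qed.

Lemma lim1 : in_lim e1.
Proof. by move=> n; rewrite /e1 rho1. Qed.
Lemma limM x y : in_lim x -> in_lim y -> in_lim (emul x y).
Proof. by move=> hx hy n; rewrite /emul rhoM hx hy. Qed.
Lemma limV x : in_lim x -> in_lim (einv x).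
Proof. by move=> hx n; rewrite /einv rhoV hx. Qed.

Lemma thr_eq_le x y j k : in_lim x -> in_lim y -> x j = y j -> k <= j -> x k = y k.
Proof.
move=> hx hy + hkj; rewrite -(subnK hkj); elim: (j - k) => [//|d IH] /= h.
apply: IH; by rewrite -hx -hy /= h.
Qed.

Arguments thr_eq_le {x y j k}.
Lemma thr_le x j k : in_lim x -> x j = 1 -> k <= j -> x k = 1.
Proof. move=> hx h hk; exact: (@thr_eq_le x e1 j k hx lim1 h hk). Qed.

Definition sect n (t : grp n) : grp n.+1 := odflt 1 [pick u | rho n u == t].
Lemma sectK n t : rho n (@sect n t) = t.
Proof.
rewrite /sect; case: pickP => [u /eqP //|].
have : t \in rho n @* [set: grp n.+1] by rewrite rho_onto inE.
by case/morphimP => u _ _ ->; move/(_ u); rewrite eqxx.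
Qed.

Fixpoint plus' (m d : nat) : nat := if d is d'.+1 then (plus' m d').+1 else m.
Lemma plus'E m d : plus' m d = m + d.
Proof. by elim: d => [|d IH] /=; rewrite ?addn0 ?addnS ?IH. Qed.

Fixpoint up (n d : nat) : grp n -> grp (plus' n d) :=
  match d return grp n -> grp (plus' n d) with
  | d'.+1 => fun t => @sect (plus' n d') (up n d' t) | 0 => fun t => t end.
Fixpoint down (m d : nat) : grp (plus' m d) -> grp m :=
  match d return grp (plus' m d) -> grp m with
  | d'.+1 => fun x => down m d' (rho _ x) | 0 => fun x => x end.

Definition gcast a b (e : a = b) (x : grp a) : grp b := eq_rect a grp x b e.
Arguments gcast {a b}.
Lemma gcast_id a (e : a = a) x : gcast e x = x.
Proof. by rewrite (eq_irrelevance e erefl). Qed.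
Lemma gcast_comp a b c (e1 : a = b) (e2 : b = c) x :
  gcast e2 (gcast e1 x) = gcast (etrans e1 e2) x.
Proof. by case: b / e1 e2 => e2; case: c / e2. Qed.
Lemma gcast_irr a b (e e' : a = b) x : gcast e x = gcast e' x.
Proof. by rewrite (eq_irrelevance e e'). Qed.
Lemma gcast_rho a b (e : a.+1 = b.+1) (e' : a = b) x :
  rho b (gcast e x) = gcast e' (rho a x).
Proof. by case: b / e' e => e; rewrite !gcast_id. Qed.

Lemma plus'S k d : plus' k.+1 d = plus' k d.+1.
Proof. by rewrite !plus'E addSn addnS. Qed.

Lemma rho_down k d (y : grp (plus' k.+1 d)) :
  rho k (down k.+1 d y) = down k d.+1 (gcast (plus'S k d) y).
Proof.
elim: d y => [|d IH] y /=; first by rewrite gcast_id.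
rewrite IH /=; congr (down _ _ _).
by rewrite (@gcast_rho _ _ (plus'S k d.+1) (plus'S k d)).
Qed.

Lemma down_up m d t : down m d (up m d t) = t.
Proof. by elim: d => [//|d IH] /=; rewrite sectK. Qed.

Lemma plus'C n k : plus' n k = plus' k n.
Proof. by rewrite !plus'E addnC. Qed.

Definition thr n (t : grp n) : elt := fun k => down k n (gcast (plus'C n k) (up n k t)).

Lemma thr_lim n t : in_lim (thr n t).
Proof.
move=> k; rewrite /thr rho_down gcast_comp /=.
rewrite (@gcast_rho _ _ _ (plus'C n k)) sectK; exact: erefl.
Qed.

Lemma thr_at n t : thr n t n = t.
Proof. by rewrite /thr gcast_id down_up. Qed.

Lemma lift_ex n (t : grp n) : exists x, in_lim x /\ x n = t.
Proof. exists (thr n t); split; [exact: thr_lim | exact: thr_at]. Qed.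


Definition pb (P : Prop) : bool := if excluded_middle_informative P then true else false.
Lemma pbP P : reflect P (pb P).
Proof. by rewrite /pb; case: excluded_middle_informative => h; constructor. Qed.

Definition img (X : epred S) n : {set grp n} := [set g | pb (exists x, X x /\ x n = g)].
Lemma imgP X n g : g \in img X n <-> exists x, X x /\ x n = g.
Proof. by rewrite inE; split => [/pbP|?]; last apply/pbP. Qed.

Lemma img_gs X n : subgrp X -> group_set (img X n).
Proof.
case=> _ h1 hM _; apply/group_setP; split.
  by apply/imgP; exists e1.
move=> a b /imgP[x [hx <-]] /imgP[y [hy <-]]; apply/imgP; exists (emul x y); split=> //; exact: hM.
Qed.
Definition imgG X n (h : subgrp X) : {group grp n} := Group (img_gs X n h).

Lemma img_rho X n : esub X in_lim -> rho n @* img X n.+1 = img X n.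
Proof.
move=> hX; apply/setP => g; apply/idP/idP.
  case/morphimP=> u _ /imgP[x [hx <-]] ->; apply/imgP; exists x; split => //; by rewrite (hX _ hx).
move/imgP=> [x [hx <-]]; apply/morphimP; exists (x n.+1).
- by rewrite inE.
- by apply/imgP; exists x.
- by rewrite (hX _ hx).
Qed.

Lemma conj_lim g x : in_lim g -> in_lim x -> in_lim (emul (einv g) (emul x g)).
Proof. by move=> hg hx; apply: limM; [apply: limV|apply: limM]. Qed.

Lemma img_normal X n : esub X in_lim -> enormalizes in_lim X -> img X n <| [set: grp n].
Proof.
move=> hX hN; rewrite /normal subsetT /=; apply/subsetP => c _; rewrite [_ \in 'N(_)]inE.
apply/subsetP => t; rewrite mem_conjg => /imgP[y [hy hyt]]; apply/imgP.
have [g [hg hgc]] := lift_ex n c.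
exists (emul (einv g) (emul y g)); split; first exact: hN.
by rewrite /emul /einv hgc hyt /conjg invgK !mulgA mulVg mul1g -mulgA mulVg mulg1.
Qed.

Definition Gk k : epred S := fun x => in_lim x /\ x k = 1.
Lemma Gk_sub k : subgrp (Gk k).
Proof.
split; first by move=> x [].
- by split; [exact: lim1|].
- by move=> x y [hx hx1] [hy hy1]; split; [exact: limM|rewrite /emul hx1 hy1 mulg1].
- by move=> x [hx hx1]; split; [exact: limV|rewrite /einv hx1 invg1].
Qed.
Lemma Gk_norm k : enormalizes in_lim (Gk k).
Proof.
move=> g h hg [hh h1]; split; first exact: conj_lim.
by rewrite /emul /einv h1 mul1g mulVg.
Qed.


Lemma FI (Nn K : epred S) m : subgrp K ->
  (forall x, K x -> x m = 1 -> Nn x) -> finite_index Nn K.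
Proof.
case=> hKl hK1 hKM hKV hN.
pose ch (t : grp m) : elt :=
  match excluded_middle_informative (exists x, K x /\ x m = t) with
  | left h => proj1_sig (constructive_indefinite_description _ h)
  | right _ => e1 end.
have chK t : K (ch t).
  rewrite /ch; case: excluded_middle_informative => // h.
  by case: (constructive_indefinite_description _ h) => x [].
have chm g : K g -> ch (g m) = ch (g m) /\ (ch (g m)) m = g m.
  move=> hg; split=> //; rewrite /ch; case: excluded_middle_informative => h.
    by case: (constructive_indefinite_description _ h) => x [].
  by case: h; exists g.
exists #|grp m|, (fun i => ch (enum_val i)); split=> [i|g hg]; first exact: chK.
exists (enum_rank (g m)); rewrite enum_rankK; apply: hN.
  by apply: hKM => //; apply: hKV.
by rewrite /emul /einv (chm g hg).2 mulVg.
Qed.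

Lemma nontriv_high h : in_lim h -> ~ eeq h e1 -> exists j, forall n, j <= n -> h n != 1.
Proof.
move=> hl hne; apply: NNPP => hno; apply: hne => i; rewrite /e1.
have [n [hin /negPn/eqP hn]] : exists n, i <= n /\ ~~ (h n != 1).
  apply: NNPP => hc; apply: hno; exists i => n hin; apply: NNPP => hc2; apply: hc.
  by exists n; split => //; apply/negP.
exact: thr_le hl hn hin.
Qed.


Definition cjE (g y : elt) : elt := emul g (emul y (einv g)).

Lemma cj_mul g x y : cjE g (emul x y) = emul (cjE g x) (cjE g y).
Proof. apply: elt_ext => i; rewrite /cjE /emul /einv !mulgA; congr (_ * _); rewrite -!mulgA; congr (_ * _); rewrite mulKg //. Qed.
Lemma cj_inv g x : cjE g (einv x) = einv (cjE g x).
Proof. apply: elt_ext => i; rewrite /cjE /emul /einv !invMg invgK !mulgA //. Qed.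
Lemma cj_comp g h y : cjE g (cjE h y) = cjE (emul g h) y.
Proof. apply: elt_ext => i; rewrite /cjE /emul /einv invMg !mulgA //. Qed.
Lemma cj1 y : cjE e1 y = y.
Proof. apply: elt_ext => i; rewrite /cjE /emul /einv /e1 invg1 mul1g mulg1 //. Qed.
Lemma cjK g y : cjE (einv g) (cjE g y) = y.
Proof. apply: elt_ext => i; rewrite /cjE /emul /einv invgK !mulgA mulVg mul1g mulgKV //. Qed.
Lemma cjKV g y : cjE g (cjE (einv g) y) = y.
Proof. apply: elt_ext => i; rewrite /cjE /emul /einv invgK !mulgA mulgV mul1g mulgK //. Qed.
Lemma cjI g y : cjE (einv g) y = emul (einv g) (emul y g).
Proof. apply: elt_ext => i; rewrite /cjE /emul /einv invgK //. Qed.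
Lemma einvK (x : elt) : einv (einv x) = x.
Proof. apply: elt_ext => i; rewrite /einv invgK //. Qed.
Lemma cj_lim g y : in_lim g -> in_lim y -> in_lim (cjE g y).
Proof. by move=> hg hy; apply: limM => //; apply: limM => //; apply: limV. Qed.
Lemma cj_at g y n : cjE g y n = g n * y n * (g n)^-1.
Proof. by rewrite /cjE /emul /einv mulgA. Qed.
Lemma mulVg_e g : in_lim g -> emul g (einv g) = e1.
Proof. move=> _; apply: elt_ext => i; rewrite /emul /einv /e1 mulgV //. Qed.

End Lim.
Arguments elt_ext {S}.
Arguments rhoM {S}.
Arguments rhoV {S}.
Arguments rho1 {S}.
Arguments lim1 {S}.
Arguments limM {S}.
Arguments limV {S}.
Arguments thr_le {S x j k}.
Arguments sectK {S}.
Arguments thr {S}.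
Arguments thr_lim {S}.
Arguments thr_at {S}.
Arguments lift_ex {S}.
Arguments imgP {S}.
Arguments img_gs {S}.
Arguments imgG {S}.
Arguments img_rho {S}.
Arguments conj_lim {S}.
Arguments img_normal {S}.
Arguments Gk {S}.
Arguments Gk_sub {S}.
Arguments Gk_norm {S}.
Arguments FI {S}.
Arguments nontriv_high {S}.
Arguments thr_eq_le {S x y j k}.
Arguments img {S}.
Arguments cjE {S}.
Arguments cj_mul {S}.
Arguments cj_inv {S}.
Arguments cj_comp {S}.
Arguments cj1 {S}.
Arguments cjK {S}.
Arguments cjKV {S}.
Arguments cjI {S}.
Arguments einvK {S}.
Arguments cj_lim {S}.
Arguments cj_at {S}.
Arguments mulVg_e {S}.

Section Main.
Variable S : invsys.
Local Notation grp := (grp S).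
Local Notation rho := (rho S).
Local Notation elt := (elt S).
Local Notation in_lim := (@in_lim S).
Local Notation e1 := (@e1 S).
Variable A : forall n, {group grp n}.
Hypothesis hA : forall n, A n <| [set: grp n].
Variable N0 : nat.
Hypothesis hC1 : forall n, N0 <= n -> critical_pair [set: grp n.+1] (A n.+1) ('ker (rho n)).
Hypothesis hC2 : forall n, N0 <= n ->
     Pn (fun k => A k) n.+1 * 'C_[set: grp n.+1](Pn (fun k => A k) n.+1)
       \subset 'ker (rho n).

Local Notation PP n := (rho n @* A n.+1).

Lemma F1 n : N0 <= n -> PP n.+1 \subset 'ker (rho n).
Proof. by move=> h; have := hC2 _ h; rewrite /Pn; apply: subset_trans; apply: mulG_subl. Qed.
Lemma F2 n : N0 <= n -> 'C_[set: grp n.+1](PP n.+1) \subset 'ker (rho n).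
Proof. by move=> h; have := hC2 _ h; rewrite /Pn; apply: subset_trans; apply: mulG_subr. Qed.
Lemma F3 n : N0 <= n -> 'ker (rho n) \subset A n.+1 /\ ~~ (A n.+1 \subset 'ker (rho n)).
Proof. by move=> h; have [_ _ + _] := hC1 _ h; rewrite properE => /andP. Qed.

Lemma LemL n (X : {group grp n.+2}) : N0 <= n -> X <| [set: grp n.+2] ->
  ~~ (A n.+2 \subset X) -> rho n @* (rho n.+1 @* X) = 1.
Proof.
move=> hn hX hAX.
have [_ _ _ hcr] := hC1 _ (leqW hn).
have hM : X :&: A n.+2 \subset 'ker (rho n.+1).
  apply: (hcr (X :&: A n.+2)%G); first exact: normalI.
  rewrite properE subsetIr; apply: contra hAX => h.
  by apply: subset_trans h (subsetIl _ _).
have hc : [~: X, A n.+2] \subset X :&: A n.+2.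
  apply: commg_subI; rewrite subsetI.
    by rewrite subxx; apply: subset_trans (normal_norm (hA _)); apply: subsetT.
  by rewrite subxx; apply: subset_trans (normal_norm hX); apply: subsetT.
have h1 : [~: rho n.+1 @* X, PP n.+1] = 1.
  rewrite /= -morphimR ?subsetT //; apply/trivgP.
  rewrite -(morphim_ker (rho n.+1)); apply: morphimS; exact: subset_trans hc hM.
have h2 : rho n.+1 @* X \subset 'ker (rho n).
  apply: subset_trans (F2 _ hn); rewrite subsetI subsetT; exact/commG1P.
apply/trivgP; rewrite -(morphim_ker (rho n)); exact: morphimS.
Qed.

Lemma Fker n : N0 <= n -> 'ker (rho n) != 1.
Proof.
move=> hn; apply/eqP => hk.
have [hs hns] := F3 _ hn; move: (hC2 _ hn); rewrite /Pn hk.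
move=> h.
have hP : PP n.+1 :=: 1 by apply/trivgP; apply: subset_trans h; apply: mulG_subl.
have hC : 'C_[set: grp n.+1](PP n.+1) :=: 1 by apply/trivgP; apply: subset_trans h; apply: mulG_subr.
move: hC; rewrite hP cent1T setTI => hT.
by move: hns; rewrite hk -hT subsetT.
Qed.


Lemma big_contains (Nn : epred S) : subgrp Nn -> eclosed Nn -> enormalizes in_lim Nn ->
  nontrivial Nn -> exists m, forall x, in_lim x -> x m = 1 -> Nn x.
Proof.
move=> hN hcl hnorm [h [hNh hne]].
have hsub := hN; case: hN => hNl hN1 hNM hNV.
have [j hj] := nontriv_high _ (hNl _ hNh) hne.
pose n0 := maxn N0 j.
have hAc n : n0 <= n -> A n.+2 \subset imgG Nn n.+2 hsub.
  move=> hn; apply: contraT => hAX.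
  have hn0 : N0 <= n by apply: leq_trans (leq_maxl _ _) hn.
  have := LemL n (imgG Nn n.+2 hsub) hn0 (img_normal _ _ hNl hnorm) hAX.
  have hin : h n \in img Nn n by apply/imgP; exists h.
  rewrite /= !img_rho //; move/setP/(_ (h n)); rewrite hin inE.
  by move=> e; have := hj n (leq_trans (leq_maxr _ _) hn); rewrite -e.
exists n0.+1 => x hx hx1; apply: hcl => // k.
have hd d : x (d + n0).+1 \in img Nn (d + n0).+1.
  elim: d => [|d IH]; first by rewrite add0n hx1; apply/imgP; exists e1.
  rewrite addSn.
  have hn0 : N0 <= (d + n0).+1 by apply: leqW; apply: leq_trans (leq_maxl _ _) (leq_addl _ _).
  have := IH; rewrite -(img_rho _ _ hNl) => /morphimP[u _ hu hxu].
  have hz : x (d + n0).+2 * u^-1 \in 'ker (rho (d + n0).+1).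
    by rewrite !inE /= rhoM rhoV hx hxu mulgV eqxx.
  have hz2 : x (d + n0).+2 * u^-1 \in imgG Nn (d + n0).+2 hsub.
    apply: subsetP (hAc _ (leq_addl _ _)) _ _.
    by apply: subsetP (F3 _ hn0).1 _ hz.
  have -> : x (d + n0).+2 = (x (d + n0).+2 * u^-1) * u by rewrite -mulgA mulVg mulg1.
  exact: (@groupM _ (imgG Nn (d + n0).+2 hsub)).
have := hd (k - n0); case/imgP => y [hy hyk]; exists y; split => //.
apply: (thr_eq_le (hNl _ hy) hx hyk).
lia.
Qed.

Lemma infinite_sub (V : epred S) k : subgrp V -> (forall x, in_lim x -> x k = 1 -> V x) ->
  ~ efinite V.
Proof.
move=> hV hk [m [f hf]].
have hVl : esub V in_lim by case: hV.
pose W L := imgG V L hV.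
have hWm L : #|W L| <= m.
  apply: leq_trans (_ : #|[set (f i) L | i : 'I_m]| <= m).
    apply: subset_leq_card; apply/subsetP => t /imgP[x [hx <-]].
    have [i hi] := hf _ hx; rewrite (hi L); exact: imset_f.
  by apply: leq_trans (leq_imset_card _ _) _; rewrite card_ord.
pose L0 := maxn N0 k.
have hstep L : L0 <= L -> (#|W L|).+1 <= #|W L.+1|.
  move=> hL.
  have hN : N0 <= L by apply: leq_trans (leq_maxl _ _) hL.
  have hkL : k <= L by apply: leq_trans (leq_maxr _ _) hL.
  have hker : 'ker (rho L) \subset W L.+1.
    apply/subsetP => t ht; apply/imgP; exists (thr L.+1 t); split; last exact: thr_at.
    apply: hk; first exact: thr_lim.
    apply: (thr_le (thr_lim _ _) _ hkL).
    by rewrite -(thr_lim L.+1 t L) thr_at; move: ht; rewrite !inE => /eqP.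
  have e1' : #|W L| = #|W L.+1 : 'ker (rho L)|.
    rewrite /= -(img_rho _ _ hVl).
    by rewrite -[img V L.+1]/(gval (W L.+1)) card_morphim setTI.
  have := LagrangeI (W L.+1) ('ker (rho L)).
  rewrite (setIidPr hker) -e1' => <-.
  have : 1 < #|'ker (rho L)| by rewrite cardG_gt1; exact: Fker.
  have := cardG_gt0 (W L); move: #|W L| #|'ker (rho L)| => a b ha hb.
  by rewrite -[X in X < _]mul1n ltn_pmul2r.
have hgrow d : d.+1 <= #|W (L0 + d)|.
  elim: d => [|d IH]; first by rewrite cardG_gt0.
  by rewrite addnS; apply: leq_trans (hstep _ (leq_addr _ _)); rewrite ltnS.
by have := leq_trans (hgrow m) (hWm _); rewrite ltnn.
Qed.


Lemma A_in_Gk j k : N0 <= j -> k <= j -> A j.+2 \subset img (Gk k) j.+2.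
Proof.
move=> hj hk; apply/subsetP => a ha; apply/imgP; exists (thr j.+2 a); split; last exact: thr_at.
split; first exact: thr_lim.
apply: (thr_le (thr_lim _ _) _ hk).
rewrite -(thr_lim j.+2 a j) -(thr_lim j.+2 a j.+1) thr_at.
have : rho j.+1 a \in rho j.+1 @* A j.+2 by apply: mem_morphim; rewrite ?inE.
by move/(subsetP (F1 _ hj)); rewrite !inE => /eqP.
Qed.

Lemma PP_normal n : PP n <| [set: grp n].
Proof. by rewrite -(rho_onto S n); apply: morphim_normal. Qed.

Lemma PP_minimal n (X : {group grp n.+1}) : N0 <= n -> X <| [set: grp n.+1] ->
  X \proper PP n.+1 -> X :=: 1.
Proof.
move=> hn hX hXP; apply/trivgP.
have honto : forall R : {set grp n.+1}, R \subset rho n.+1 @* [set: grp n.+2].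
  by move=> R; rewrite rho_onto subsetT.
have hY : (rho n.+1 @*^-1 X) :&: A n.+2 <| [set: grp n.+2].
  apply: normalI => //; rewrite -(morphpreT (rho n.+1)) morphpre_normal //.
have [_ _ _ hcr] := hC1 _ (leqW hn).
have hYk : (rho n.+1 @*^-1 X) :&: A n.+2 \subset 'ker (rho n.+1).
  apply: (hcr ((rho n.+1 @*^-1 X) :&: A n.+2)%G hY).
  rewrite properE subsetIr /=; apply/negP => hAY.
  move: hXP; rewrite properE => /andP[_]; apply/negP; apply/negPn.
  rewrite sub_morphim_pre ?subsetT //; exact: subset_trans hAY (subsetIl _ _).
apply/subsetP => x hx.
have := subsetP (proper_sub hXP) _ hx; case/morphimP => b _ hb hxb.
have : b \in 'ker (rho n.+1).
  by apply: (subsetP hYk); rewrite !inE /= -hxb hx hb.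
by rewrite !inE -hxb.
Qed.

Lemma Glim_sub : subgrp (Glim S).
Proof.
split; [by [] | exact: lim1 | by move=> x y; apply: limM | by move=> x; apply: limV].
Qed.

Lemma NVP : ~ virtually_pronilpotent (Glim S).
Proof.
case=> H [[hHs hHG [k hk]] hpro].
pose j := maxn N0 k.
have hjN : N0 <= j by apply: leq_maxl.
have hkj : k <= j by apply: leq_maxr.
pose Kn := imgG (@Gk S k) j.+2 (@Gk_sub S k).
have hKn : Kn <| [set: grp j.+2].
  by apply: img_normal; [by move=> x [] | exact: Gk_norm].
have [P [hP nilP]] := hpro j.+2.
have hKP : Kn \subset P.
  apply/subsetP => t /imgP[x [[hx hx1] <-]]; apply/hP; exists x; split => //; exact: hk.
have nilK : nilpotent Kn := nilpotentS hKP nilP.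
have hAK := A_in_Gk j k hjN hkj.
have hPK : PP j.+2 \subset Kn.
  apply: subset_trans (F1 _ (leqW hjN)) _.
  by apply: subset_trans (F3 _ (leqW hjN)).1 hAK.
have hcomm : [~: PP j.+2, Kn] = 1.
  have [->|hne] := eqVneq (PP j.+2) 1; first exact: comm1G.
  have hpr : [~: PP j.+2, Kn] \proper PP j.+2.
    apply: nil_comm_properl nilK hPK hne _.
    rewrite subsetI subxx; apply: subset_trans (normal_norm (PP_normal _)); exact: subsetT.
  have hnorm : [~: PP j.+2, Kn] <| [set: grp j.+2].
    rewrite /normal subsetT /=; apply: normsR.
      exact: subset_trans (subsetT _) (normal_norm (PP_normal _)).
    exact: subset_trans (subsetT _) (normal_norm hKn).
  exact: (PP_minimal j.+1 ([~: PP j.+2, Kn])%G (leqW hjN) hnorm hpr).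
have hKC : Kn \subset 'C_[set: grp j.+2](PP j.+2).
  by rewrite subsetI subsetT centsC; apply/commG1P.
have [_ hnot] := F3 _ (leqW hjN).
move/negP: hnot; apply; apply: subset_trans hAK _.
exact: subset_trans hKC (F2 _ (leqW hjN)).
Qed.

Lemma JI : just_infinite (Glim S).
Proof.
split.
  apply: (infinite_sub (Glim S) 0 Glim_sub) => x hx _; exact: hx.
move=> Nn hN hcl hsub hnorm hnt.
have [m hm] := big_contains Nn hN hcl hnorm hnt.
apply: (FI _ _ m Glim_sub) => x hx hx1; exact: hm.
Qed.


Section Core.
Variables H Nn : epred S.
Variable k : nat.
Hypothesis hHs : subgrp H.
Hypothesis hHk : forall x, in_lim x -> x k = 1 -> H x.
Hypothesis hNs : subgrp Nn.
Hypothesis hNcl : eclosed Nn.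
Hypothesis hNH : esub Nn H.
Hypothesis hNn : enormalizes H Nn.
Hypothesis hNt : nontrivial Nn.

Definition N' : epred S := fun x => Nn x /\ x k = 1.

Lemma Nl x : Nn x -> in_lim x.
Proof. by case: hNs => hl _ _ _; apply: hl. Qed.
Lemma N'l x : N' x -> in_lim x.
Proof. by case=> h _; apply: Nl. Qed.

Lemma N'cj u y : H u -> N' y -> N' (cjE u y).
Proof.
move=> hu [hy hy1]; split.
  have hHV : H (einv u) by case: hHs => _ _ _; apply.
  by have := hNn _ _ hHV hy; rewrite einvK.
by rewrite cj_at hy1 mulg1 mulgV.
Qed.

Lemma N'inv g g' y : in_lim g -> in_lim g' -> g k = g' k -> in_lim y ->
  N' (cjE g y) -> N' (cjE g' y).
Proof.
move=> hg hg' hk hy hN.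
have -> : cjE g' y = cjE (emul g' (einv g)) (cjE g y).
  rewrite cj_comp; congr cjE; apply: elt_ext => i; by rewrite /emul /einv mulgKV.
apply: N'cj => //; apply: hHk; first by apply: limM => //; apply: limV.
by rewrite /emul /einv hk mulgV.
Qed.

Lemma N'_sub : subgrp N'.
Proof.
case: hNs => hl h1 hM hV; split.
- by move=> x [hx _]; apply: hl.
- by split.
- by move=> x y [hx hx1] [hy hy1]; split; [apply: hM|rewrite /emul hx1 hy1 mulg1].
- by move=> x [hx hx1]; split; [apply: hV|rewrite /einv hx1 invg1].
Qed.

Lemma N'_cl : eclosed N'.
Proof.
move=> x hx happ; split.
  apply: hNcl => // n; have [y [[hy _] hyn]] := happ n; by exists y.
by have [y [[_ hy1] <-]] := happ k.
Qed.

Lemma N'_nt : nontrivial N'.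
Proof.
apply: NNPP => hno.
have htriv : forall y, N' y -> eeq y e1.
  move=> y hy; apply: NNPP => hne; apply: hno; by exists y.
case: hNt => h [hNh hne]; apply: hne.
have hl := Nl _ hNh.
have key : forall n, maxn N0 k <= n -> h n = 1.
  move=> n hn.
  have hN0 : N0 <= n by apply: leq_trans (leq_maxl _ _) hn.
  have hkn : k <= n by apply: leq_trans (leq_maxr _ _) hn.
  have hc : h n.+1 \in 'C_[set: grp n.+1](PP n.+1).
    rewrite inE /= inE; apply/centP => p hp.
    have hpk : p \in 'ker (rho n) by apply: (subsetP (F1 _ hN0)).
    pose y := thr n.+1 p.
    have hyl : in_lim y := thr_lim _ _.
    have hyk : y k = 1.
      apply: (thr_le hyl _ hkn); rewrite -(hyl n) /y thr_at.
      by move: hpk; rewrite !inE => /eqP.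
    have hyH : H y := hHk _ hyl hyk.
    pose c := emul (einv h) (emul (einv y) (emul h y)).
    have hc : N' c.
      split.
        case: hNs => _ _ hM hV; apply: hM; first exact: hV.
        by have := hNn _ _ hyH hNh.
      by rewrite /c /emul /einv hyk invg1 !mul1g !mulg1 mulVg.
    have := htriv _ hc (n.+1); rewrite /c /y /emul /einv /e1 /= thr_at => e.
    have e2 := congr1 (mulg (h n.+1)) e; rewrite mulKVg mulg1 in e2.
    have e3 := congr1 (mulg p) e2; rewrite mulKVg in e3.
    by rewrite /commute -e3.
  have := subsetP (F2 _ hN0) _ hc; rewrite !inE hl => /eqP.
  done.
move=> i; rewrite /e1.
have hi : i <= maxn i (maxn N0 k) by apply: leq_maxl.
apply: (thr_le hl _ hi); apply: key; exact: leq_maxr.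
Qed.


Definition NS (T : {set grp k}) : epred S :=
  fun y => in_lim y /\ forall s, s \in T -> N' (cjE (thr k s) y).

Lemma cj_e1 g : cjE g e1 = e1.
Proof. apply: elt_ext => i; by rewrite /cjE /emul /einv /e1 mul1g mulgV. Qed.

Lemma NS_sub T : subgrp (NS T).
Proof.
have [_ h1 hM hV] := N'_sub.
split.
- by move=> x [].
- by split; [exact: lim1 | move=> s _; rewrite cj_e1].
- move=> x y [hx Hx] [hy Hy]; split; first exact: limM.
  by move=> s hs; rewrite cj_mul; apply: hM; [apply: Hx|apply: Hy].
- move=> x [hx Hx]; split; first exact: limV.
  by move=> s hs; rewrite cj_inv; apply: hV; apply: Hx.
Qed.

Lemma NS_cl T : eclosed (NS T).
Proof.
move=> x hx happ; split => // s hs.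
apply: N'_cl; first by apply: cj_lim => //; exact: thr_lim.
move=> n; have [y [[hy Hy] hyn]] := happ n.
by exists (cjE (thr k s) y); split; [apply: Hy | rewrite !cj_at hyn].
Qed.

Lemma NS_k T y : T != set0 -> NS T y -> y k = 1.
Proof.
case/set0Pn => s hs [hy Hy]; have [_ ] := Hy s hs.
rewrite cj_at thr_at => e.
have e2 := congr1 (fun z => z * s) e; rewrite /= mulgKV mul1g in e2.
by apply: (mulgI s); rewrite mulg1.
Qed.

Lemma NS_norm T u y : in_lim u -> u k = 1 -> NS T y -> NS T (cjE u y).
Proof.
move=> hu hu1 [hy Hy]; split; first exact: cj_lim.
move=> s hs; rewrite cj_comp; apply: (N'inv (thr k s)) => //; first exact: thr_lim.
- by apply: limM => //; exact: thr_lim.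
- by rewrite /emul hu1 mulg1.
- exact: Hy.
Qed.

Lemma NS_conj T g y : in_lim g -> in_lim y -> (NS T (cjE g y) <-> NS (T :* g k) y).
Proof.
move=> hg hy; have hgy := cj_lim _ _ hg hy.
split.
- move=> [_ Hy]; split => // t /rcosetP[s hs ->].
  have := Hy s hs; rewrite cj_comp => hN.
  apply: (N'inv (emul (thr k s) g)) => //.
  + by apply: limM => //; exact: thr_lim.
  + exact: thr_lim.
  + by rewrite /emul !thr_at.
- move=> [_ Hy]; split => // s hs.
  rewrite cj_comp; apply: (N'inv (thr k (s * g k))) => //.
  + exact: thr_lim.
  + by apply: limM => //; exact: thr_lim.
  + by rewrite /emul !thr_at.
  + by apply: Hy; rewrite mem_rcoset mulgK.
Qed.

Lemma NS_U T1 T2 y : NS (T1 :|: T2) y <-> NS T1 y /\ NS T2 y.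
Proof.
split.
  by case=> hy Hy; split; split=> // s hs; apply: Hy; rewrite inE hs ?orbT.
by case=> [[hy H1] [_ H2]]; split=> // s; rewrite inE => /orP[] hs; [apply: H1|apply: H2].
Qed.

Lemma NS1 y : in_lim y -> (NS [set 1] y <-> N' y).
Proof.
move=> hy; split.
  case=> _ Hy; have := Hy 1 (set11 _); rewrite -{2}(cj1 y) => hN.
  apply: (N'inv (thr k 1)) => //; [exact: thr_lim | exact: lim1 | by rewrite thr_at].
move=> hN; split => // s; rewrite inE => /eqP ->.
apply: (N'inv e1) => //; [exact: lim1 | exact: thr_lim | by rewrite thr_at | by rewrite cj1].
Qed.

Lemma NS_nt1 : nontrivial (NS [set 1]).
Proof.
have [h [hN hne]] := N'_nt; exists h; split => //.
by apply/NS1 => //; exact: N'l.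
Qed.

Lemma exS0 : exists S0 : {set grp k}, nontrivial (NS S0) /\
  forall T, nontrivial (NS T) -> #|T| <= #|S0|.
Proof.
pose P n := pb (exists T : {set grp k}, #|T| = n /\ nontrivial (NS T)).
have exP : exists n, P n by exists 1%N; apply/pbP; exists [set 1]; split; [exact: cards1 | exact: NS_nt1].
have ubP : forall n, P n -> n <= #|grp k|.
  by move=> n /pbP[T [<- _]]; apply: max_card.
case: (ex_maxnP exP ubP) => m /pbP[S0 [hS0 hnt]] hmax.
exists S0; split => // T hT; rewrite hS0; apply: hmax; apply/pbP; by exists T.
Qed.


Section S0sec.
Variable S0 : {set grp k}.
Hypothesis hS0nt : nontrivial (NS S0).
Hypothesis hS0max : forall T, nontrivial (NS T) -> #|T| <= #|S0|.

Lemma S0_ne : S0 != set0.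
Proof.
have := hS0max _ NS_nt1; rewrite cards1; apply: contraTneq => ->; by rewrite cards0.
Qed.

Lemma rc_ne (c : grp k) : S0 :* c != set0.
Proof.
apply: contraNneq S0_ne => h; apply/eqP; apply/setP => s; rewrite inE.
apply/negP => hs; have : s * c \in S0 :* c by rewrite mem_rcoset mulgK.
by rewrite h inE.
Qed.

Lemma comm_key g h z1 z2 : in_lim g -> in_lim h -> S0 :* g k != S0 :* h k ->
  NS (S0 :* g k) z1 -> NS (S0 :* h k) z2 ->
  eeq (emul (einv z1) (emul (einv z2) (emul z1 z2))) e1.
Proof.
move=> hg hh hne hz1 hz2.
have hz1l : in_lim z1 by case: hz1.
have hz2l : in_lim z2 by case: hz2.
have hz1k := NS_k _ _ (rc_ne (g k)) hz1.
have hz2k := NS_k _ _ (rc_ne (h k)) hz2.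
have [_ _ hM1 hV1] := NS_sub (S0 :* g k).
have [_ _ hM2 hV2] := NS_sub (S0 :* h k).
set c := emul _ _.
have hc1 : NS (S0 :* g k) c.
  apply: hM1; first exact: hV1.
  rewrite -cjI; apply: NS_norm => //; first exact: limV.
  by rewrite /einv hz2k invg1.
have hc2 : NS (S0 :* h k) c.
  have -> : c = emul (cjE (einv z1) (einv z2)) z2.
    by apply: elt_ext => i; rewrite /c /cjE /emul /einv invgK !mulgA.
  apply: hM2 => //; apply: NS_norm => //; first exact: limV.
    by rewrite /einv hz1k invg1.
  exact: hV2.
have hcU : NS (S0 :* g k :|: S0 :* h k) c by apply/NS_U.
apply: NNPP => hnc.
have : #|S0 :* g k :|: S0 :* h k| <= #|S0|.
  by apply: hS0max; exists c; split.
apply/negP; rewrite -ltnNge.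
have hsub : S0 :* g k \subset S0 :* g k :|: S0 :* h k by apply: subsetUl.
rewrite -(card_rcoset _ (g k)).
rewrite ltn_neqAle subset_leq_card // andbT.
apply: contra hne => hc.
have hU : S0 :* g k == S0 :* g k :|: S0 :* h k by rewrite eqEcard hsub -(eqP hc) leqnn.
rewrite eq_sym eqEcard !card_rcoset leqnn andbT (eqP hU); exact: subsetUr.
Qed.


Lemma U_conj n (x : grp n) :
  imgG (NS S0) n (NS_sub S0) :^ x = img (NS (S0 :* thr n x k)) n.
Proof.
have hg := thr_lim n x.
apply/setP => t; rewrite mem_conjg; apply/idP/idP.
  move/imgP=> [z [hz hzn]]; apply/imgP.
  have hzl : in_lim z by case: hz.
  exists (cjE (einv (thr n x)) z); split.
    apply/(NS_conj _ _ _ hg (cj_lim _ _ (limV _ hg) hzl)).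
    by rewrite cjKV.
  by rewrite cj_at hzn /einv thr_at /conjg !invgK !mulgA mulVg mul1g mulgKV.
move/imgP=> [y [hy hyn]]; apply/imgP.
have hyl : in_lim y by case: hy.
exists (cjE (thr n x) y); split; first exact/(NS_conj _ _ _ hg hyl).
by rewrite cj_at hyn thr_at /conjg invgK mulgA.
Qed.

Lemma comm_level n (x y : grp n) :
  let U := imgG (NS S0) n (NS_sub S0) in
  U :^ x != U :^ y -> U :^ x \subset 'C(U :^ y).
Proof.
move=> U; rewrite /U !U_conj => hne.
have hne' : S0 :* thr n x k != S0 :* thr n y k.
  by apply: contra hne => /eqP ->.
apply/subsetP => t1 /imgP[z1 [hz1 <-]]; apply/centP => t2 /imgP[z2 [hz2 <-]].
have := comm_key _ _ _ _ (thr_lim n x) (thr_lim n y) hne' hz1 hz2 n.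
rewrite /emul /einv /e1 => e.
have e2 := congr1 (mulg (z1 n)) e; rewrite mulKVg mulg1 in e2.
have e3 := congr1 (mulg (z2 n)) e2; rewrite mulKVg in e3.
by rewrite /commute e3.
Qed.


Lemma A_in_gen j : N0 <= j -> (exists t, t \in img (NS S0) j /\ t != 1) ->
  A j.+2 \subset << \bigcup_(x in [set: grp j.+2]) (imgG (NS S0) j.+2 (NS_sub S0)) :^ x >>.
Proof.
move=> hj [t [ht ht1]]; apply: contraT => hAn.
set U := imgG (NS S0) j.+2 (NS_sub S0).
have hT : << \bigcup_(x in [set: grp j.+2]) U :^ x >> <| [set: grp j.+2].
  rewrite /normal subsetT /= -class_supportEr.
  exact: subset_trans (class_support_norm _ _) (norm_gen _).
have := LemL j (<< \bigcup_(x in [set: grp j.+2]) U :^ x >>)%G hj hT hAn.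
have hUT : U \subset << \bigcup_(x in [set: grp j.+2]) U :^ x >>.
  apply/subsetP => u hu; apply: mem_gen.
  rewrite -class_supportEr -[u]conjg1; apply: imset2_f => //; exact: in_setT.
have hl : esub (NS S0) in_lim by move=> x [].
move=> e; have := morphimS (rho j) (morphimS (rho j.+1) hUT); rewrite e.
rewrite /U /= !img_rho // => /subsetP /(_ t ht); rewrite inE.
by move/eqP => e1'; move: ht1; rewrite e1' eqxx.
Qed.


Lemma L_norm : (forall M, exists n, M <= n /\ img (NS S0) n <| [set: grp n]) ->
  enormalizes in_lim (NS S0).
Proof.
move=> hst g y hg hy; rewrite -cjI.
have hyl : in_lim y by case: hy.
have hcl : in_lim (cjE (einv g) y) by apply: cj_lim => //; apply: limV.
apply: NS_cl => // m.
have [n [hmn hnorm]] := hst m.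
have hc : cjE (einv g) y n \in img (NS S0) n.
  have hyn : y n \in img (NS S0) n by apply/imgP; exists y.
  have hgn : g n \in 'N(img (NS S0) n) by apply: (subsetP (normal_norm hnorm)); exact: in_setT.
  rewrite cj_at /einv invgK; move: hyn; by rewrite -(memJ_norm (y n) hgn) /conjg mulgA.
case/imgP: hc => z [hz hzn]; exists z; split => //.
have hzl : in_lim z by case: hz.
exact: (thr_eq_le hzl hcl hzn hmn).
Qed.

Lemma core_final : (forall M, exists n, M <= n /\ img (NS S0) n <| [set: grp n]) ->
  exists m, forall x, in_lim x -> x m = 1 -> Nn x.
Proof.
move=> hst.
have [m hm] := big_contains (NS S0) (NS_sub S0) (NS_cl S0) (L_norm hst) hS0nt.
exists m => x hx hx1.
case/set0Pn: S0_ne => s0 hs0.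
have hg := thr_lim k s0.
have : NS S0 (cjE (einv (thr k s0)) x).
  apply: hm; first by apply: cj_lim => //; apply: limV.
  by rewrite cj_at hx1 mulg1 mulgV.
by case=> _ H'; have := H' s0 hs0; rewrite cjKV; case.
Qed.

Lemma hst_from : (forall M, exists n, M <= n /\
      forall U : {group grp n},
        (forall x y, U :^ x != U :^ y -> U :^ x \subset 'C(U :^ y)) ->
        A n \subset << \bigcup_(x in [set: grp n]) U :^ x >> ->
        U <| [set: grp n]) ->
  forall M, exists n, M <= n /\ img (NS S0) n <| [set: grp n].
Proof.
move=> hstar M.
case: hS0nt => h [hh hne].
have hhl : in_lim h by case: hh.
have [j1 hj1] := nontriv_high _ hhl hne.
have [n [hn hU]] := hstar (maxn M (maxn N0 j1)).+2.
move: hn hU; case: n => [//|[//|j]] hn hU.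
have hjM : maxn M (maxn N0 j1) <= j by [].
exists j.+2; split.
  by apply: leq_trans (leq_maxl _ _) _; apply: leq_trans hjM _; apply: leqW; apply: leqW.
apply: (hU (imgG (NS S0) j.+2 (NS_sub S0))).
  by move=> x y; apply: comm_level.
apply: A_in_gen.
  by apply: leq_trans (leq_maxl N0 j1) _; apply: leq_trans (leq_maxr M _) hjM.
exists (h j); split; first by apply/imgP; exists h.
by apply: hj1; apply: leq_trans (leq_maxr N0 j1) _; apply: leq_trans (leq_maxr M _) hjM.
Qed.

End S0sec.
End Core.

End Main.


Theorem theorem5 (S : invsys) (A : forall n, {group grp S n})
  (hA : forall n, A n <| [set: grp S n])
  (* for all but finitely many m = n+1:  (A_m, B_m) critical in G_m, with
     B_m = ker rho_n, and P_m C_{G_m}(P_m) <= B_m *)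
  (hcrit : exists N, forall n, N <= n ->
     critical_pair [set: grp S n.+1] (A n.+1) ('ker (rho S n)) /\
     Pn (fun k => A k) n.+1 * 'C_[set: grp S n.+1](Pn (fun k => A k) n.+1)
       \subset 'ker (rho S n)) :
  (just_infinite (Glim S) /\ ~ virtually_pronilpotent (Glim S)) /\
  ((forall N, exists n, N <= n /\
      forall U : {group grp S n},
        (forall x y, U :^ x != U :^ y -> U :^ x \subset 'C(U :^ y)) ->
        A n \subset << \bigcup_(x in [set: grp S n]) U :^ x >> ->
        U <| [set: grp S n]) ->
   hereditarily_just_infinite (Glim S)).
Proof.
case: hcrit => N0 hc.
have hC1 : forall n, N0 <= n -> critical_pair [set: grp S n.+1] (A n.+1) ('ker (rho S n)).
  by move=> n hn; case: (hc n hn).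
have hC2 : forall n, N0 <= n ->
     Pn (fun k => A k) n.+1 * 'C_[set: grp S n.+1](Pn (fun k => A k) n.+1)
       \subset 'ker (rho S n).
  by move=> n hn; case: (hc n hn).
have JI' := JI S A hA N0 hC1 hC2.
split; first by split; [exact: JI' | exact: (NVP S A hA N0 hC1 hC2)].
move=> hstar; split; first exact: JI'.
move=> H [hHs hHG [k hk]]; split.
  exact: (infinite_sub S A N0 hC1 hC2 H k hHs hk).
move=> Nn hN hcl hsub hnorm hnt.
have [S0 [hS0nt hS0max]] := exS0 S A N0 hC2 H Nn k hHs hk hN hnorm hnt.
have hst := hst_from S A hA N0 hC1 hC2 H Nn k hHs hk hN hnorm hnt S0 hS0nt hS0max hstar.
have [m hm] := core_final S A hA N0 hC1 hC2 H Nn k hHs hk hN hcl hnorm hnt S0 hS0nt hS0max hst.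
apply: (FI Nn H m hHs) => x hx hx1; apply: hm => //; exact: hHG.
Qed.
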